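(* Let $a>0$, $\mu\in(0,1]$, $0<\lambda<1$ and let $\gamma$ be a local stable leaf. Then the $\theta_a$-diameter of $\mathcal D(\lambda a,\mu,\gamma)$ inside $\mathcal D(a,\mu,\gamma)$, i.e. $\sup\{\theta_a(\rho',\rho''):\rho',\rho''\in\mathcal D(\lambda a,\mu,\gamma)\}$, is at most $D(a):=4a+\log(\tau_2/\tau_1)<\infty$, where $\tau_1:=\inf\{\frac{z-z^{\lambda}}{z-z^{-\lambda}}:z>1\}$ and $\tau_2:=\sup\{\frac{z-z^{-\lambda}}{z-z^{\lambda}}:z>1\}$. In particular, if $\omega$, $a'>0$ and $a$ satisfy $\lambda:=(a'+\bar G(\omega))\lambda_s^\mu/a<1$, then for every leaf $\gamma$ and preimage leaf $\gamma_j$, $$\sup\{\theta_a(\mathscr L_j^\omega\rho',\mathscr L_j^\omega\rho''):\ \rho',\rho''\in\mathcal D(a',\mu,\gamma)\}\le D(a),$$ a bound independent of $\gamma$ and $\gamma_j$.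
   Context: Local stable leaves $\gamma$ of a uniformly hyperbolic set $\Lambda$ of a $C^2$ diffeomorphism $f$ of a compact Riemannian manifold (distance $d\le 1$ on the relevant open set $Q$), with induced Riemannian measures $m_\gamma$. $\mathcal D(a,\mu,\gamma):=\{\rho:\gamma\to\mathbb R:\ \rho>0,\ \rho(x)\le\rho(y)e^{a d(x,y)^\mu}\ \forall x,y\in\gamma\}$, and $\theta_a$ is its Hilbert projective metric: with $v\preceq w$ iff $w-v\in\mathcal D(a,\mu,\gamma)\cup\{0\}$, $\theta_a(v_1,v_2)=\log(\beta/\alpha)$ where $\alpha=\sup\{t>0:tv_1\preceq v_2\}$, $\beta=\inf\{s>0:v_2\preceq sv_1\}$. Constants: $0<\lambda_s<1$ with $d(fx,fy)\le\lambda_s d(x,y)$ on leaves; preimage leaves $\gamma_1,\dots,\gamma_n$ of $\gamma$ satisfy $\gamma\cap f(Q)=\bigcup_jf(\gamma_j)$; $\mathscr L_j^\omega\rho:=\frac{|\det D(f|_{\gamma_j})|}{|\det Df|}(\rho\circ f)(g(Y_1(\omega),\cdot)\circ f)$ on $\gamma_j$, with $g$ a nonnegative likelihood and $G(\omega)$ a log-Lipschitz constant of $g(Y_1(\omega),\cdot)$ on $Q$; $\bar G(\omega):=G(\omega)+(K_1+K_2)/\lambda_s^\mu$ with $K_1,K_2$ Lipschitz constants of $\log|\det Df|$ and $\log|\det D(f|_{\gamma_j})|$. *)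

(* Defs.v *)
From mathcomp Require Import all_boot all_order all_algebra.
From mathcomp Require Import all_classical all_reals all_analysis.
Set Implicit Arguments. Unset Strict Implicit. Unset Printing Implicit Defensive.
Import Order.TTheory GRing.Theory Num.Theory.
Local Open Scope classical_set_scope.
Local Open Scope ring_scope.

Section Defs.
Context {R : realType} {M : Type}.

Definition is_dist (d : M -> M -> R) : Prop :=
  (forall x y, 0 <= d x y) /\ (forall x, d x x = 0) /\
  (forall x y, d x y = d y x) /\ (forall x y z, d x z <= d x y + d y z).

Definition cone (d : M -> M -> R) (a mu : R) (S : set M) : set (M -> R) :=
  [set rho | (forall x, S x -> 0 < rho x) /\
    (forall x y, S x -> S y -> rho x <= rho y * expR (a * d x y `^ mu))].

Definition cone_le (d : M -> M -> R) (a mu : R) (S : set M) (v w : M -> R) : Prop :=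
  cone d a mu S (fun x => w x - v x) \/ (forall x, S x -> w x = v x).

Definition hilbert_alpha d a mu S (v1 v2 : M -> R) : \bar R :=
  ereal_sup [set t%:E | t in [set t : R | 0 < t /\ cone_le d a mu S (fun x => t * v1 x) v2]].

Definition hilbert_beta d a mu S (v1 v2 : M -> R) : \bar R :=
  ereal_inf [set s%:E | s in [set s : R | 0 < s /\ cone_le d a mu S v2 (fun x => s * v1 x)]].

Definition hilbert_theta d a mu S (v1 v2 : M -> R) : \bar R :=
  match hilbert_alpha d a mu S v1 v2, hilbert_beta d a mu S v1 v2 with
  | EFin al, EFin be => if 0 < al then (ln (be / al))%:E else +oo%E
  | _, _ => +oo%E
  end.

(* L_j rho = |det D(f|gamma_j)| / |det Df| * (rho o f) * (g(Y_1,.) o f) *)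
Definition transfer (f : M -> M) (Jleaf Jfull h rho : M -> R) : M -> R :=
  fun x => Jleaf x / Jfull x * rho (f x) * h (f x).

End Defs.

Definition tau1 {R : realType} (lam : R) : \bar R :=
  ereal_inf [set ((z - z `^ lam) / (z - z `^ (- lam)))%:E | z in [set z : R | 1 < z]].

Definition tau2 {R : realType} (lam : R) : \bar R :=
  ereal_sup [set ((z - z `^ (- lam)) / (z - z `^ lam))%:E | z in [set z : R | 1 < z]].

Definition Dbound {R : realType} (lam a : R) : R :=
  4 * a + ln (fine (tau2 lam) / fine (tau1 lam)).

(* Main.v *)
Require Import Defs.
From mathcomp Require Import all_boot all_order all_algebra.
From mathcomp Require Import all_classical all_reals all_analysis.
From mathcomp Require Import ring lra.
Import Order.TTheory GRing.Theory Num.Theory.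
Local Open Scope classical_set_scope.
Local Open Scope ring_scope.


Section S.
Variable R : realType.

Lemma ratio_key (lam u : R) : 0 < lam < 1 -> 0 < u ->
  (1 - lam) / (2 * (1 + lam)) * (expR u - expR (- (lam * u))) <= expR u - expR (lam * u).
Proof.
move=> /andP[l0 l1] u0.
set X := expR (- ((1 - lam) * u)); set Y := expR (- ((1 + lam) * u)).
have EX : expR (lam * u) = expR u * X by rewrite /X -expRD; congr expR; ring.
have EY : expR (- (lam * u)) = expR u * Y by rewrite /Y -expRD; congr expR; ring.
have HX : X * (1 + (1 - lam) * u) <= 1.
  have h1 := expR_ge1Dx ((1 - lam) * u).
  have h2 : X * expR ((1 - lam) * u) = 1 by rewrite /X -expRD addNr expR0.
  have X0 : 0 <= X by exact: expR_ge0.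
  nra.
have HY : 1 - (1 + lam) * u <= Y.
  by have := expR_ge1Dx (- ((1 + lam) * u)); rewrite /Y; lra.
have X0 : 0 < X by exact: expR_gt0.
have Y1 : Y <= 1.
  have : Y <= expR 0 by rewrite /Y ler_expR; nra.
  by rewrite expR0.
have E0 : 0 < expR u by exact: expR_gt0.
rewrite EX EY.
have kE : (1 - lam) / (2 * (1 + lam)) * (2 * (1 + lam)) = 1 - lam.
  by rewrite divfK //; lra.
have k0 : 0 < (1 - lam) / (2 * (1 + lam)) by apply: divr_gt0; lra.
set k := (1 - lam) / (2 * (1 + lam)) in kE k0 *.
suff H : k * (1 - Y) <= 1 - X by nra.
have [pu1|pu1] := lerP 1 ((1 - lam) * u).
- have : X * 2 <= 1 by nra.
  have hk : k <= 1/2 by nra.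
  have Y0 : 0 < Y by exact: expR_gt0.
  have : k * (1 - Y) <= k by nra.
  lra.
- have pu0 : 0 < (1 - lam) * u by nra.
  have X1 : X <= 1 by nra.
  have h3 : (1 - lam) * u <= (1 - X) * (1 + (1 - lam) * u) by nra.
  have h4 : (1 - lam) * u <= 2 * (1 - X) by nra.
  have h5 : k * (1 - Y) <= k * ((1 + lam) * u) by apply: ler_wpM2l; lra.
  have h6 : k * ((1 + lam) * u) = (1 - lam) * u / 2.
    by rewrite -kE; field.
  lra.
Qed.

Lemma pow_facts (lam : R) (z : R) : 1 < z -> exists u, 0 < u /\ z = expR u /\
  z `^ lam = expR (lam * u) /\ z `^ (- lam) = expR (- (lam * u)).
Proof.
move=> z1; have z0 : 0 < z by lra.
exists (ln z); split; first by rewrite -ln1 ltr_ln // posrE.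
split; first by rewrite lnK // posrE.
by rewrite /powR gt_eqF // mulNr.
Qed.

Lemma ratio_facts (lam z : R) : 0 < lam < 1 -> 1 < z ->
  let k := (1 - lam) / (2 * (1 + lam)) in
  [/\ k <= (z - z `^ lam) / (z - z `^ (- lam)),
      (z - z `^ lam) / (z - z `^ (- lam)) < 1,
      1 < (z - z `^ (- lam)) / (z - z `^ lam) &
      (z - z `^ (- lam)) / (z - z `^ lam) <= k^-1].
Proof.
move=> hl z1 k; have [u [u0 [-> [-> ->]]]] := @pow_facts lam z z1.
have /andP[l0 l1] := hl.
have K := @ratio_key lam u hl u0; rewrite -/k in K.
have BA : expR (- (lam * u)) < expR (lam * u) by rewrite ltr_expR; nra.
have AE : expR (lam * u) < expR u by rewrite ltr_expR; nra.
have k0 : 0 < k by apply: divr_gt0; lra.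
have d1 : 0 < expR u - expR (- (lam * u)) by lra.
have d2 : 0 < expR u - expR (lam * u) by lra.
split.
- by rewrite ler_pdivlMr.
- by rewrite ltr_pdivrMr // mul1r; lra.
- by rewrite ltr_pdivlMr // mul1r; lra.
- rewrite ler_pdivrMr // -[X in X <= _](mulKf (lt0r_neq0 k0)) ler_pM2l ?invr_gt0 //.
Qed.

Lemma inf_img (A : set R) (g : R -> R) (k : R) (z0 : R) : A z0 ->
  (forall z, A z -> k <= g z) ->
  exists T, ereal_inf [set (g z)%:E | z in A] = T%:E /\ k <= T /\
    forall z, A z -> T <= g z.
Proof.
move=> Az0 kb.
have h1 : (ereal_inf [set (g z)%:E | z in A] <= (g z0)%:E)%E.
  by apply: ereal_inf_lbound; exists z0.
have h2 : (k%:E <= ereal_inf [set (g z)%:E | z in A])%E.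
  by apply: le_ereal_inf_tmp => _ [z Az <-]; rewrite lee_fin; exact: kb.
move: h1 h2; case: (ereal_inf _) (@ereal_inf_lbound _ [set (g z)%:E | z in A]) => //
  T lb _ h2; exists T; split => //; split; first by rewrite -lee_fin.
by move=> z Az; rewrite -lee_fin; apply: lb; exists z.
Qed.

Lemma sup_img (A : set R) (g : R -> R) (k : R) (z0 : R) : A z0 ->
  (forall z, A z -> g z <= k) ->
  exists T, ereal_sup [set (g z)%:E | z in A] = T%:E /\ T <= k /\
    forall z, A z -> g z <= T.
Proof.
move=> Az0 kb.
have h1 : ((g z0)%:E <= ereal_sup [set (g z)%:E | z in A])%E.
  by apply: ereal_sup_ubound; exists z0.
have h2 : (ereal_sup [set (g z)%:E | z in A] <= k%:E)%E.
  by apply: ge_ereal_sup => _ [z Az <-]; rewrite lee_fin; exact: kb.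
move: h1 h2; case: (ereal_sup _) (@ereal_sup_ubound _ [set (g z)%:E | z in A]) => //
  T ub _ h2; exists T; split => //; split; first by rewrite -lee_fin.
by move=> z Az; rewrite -lee_fin; apply: ub; exists z.
Qed.


Lemma tau1_facts (lam : R) : 0 < lam < 1 -> exists T1, tau1 lam = T1%:E /\ 0 < T1 < 1 /\
  forall z, 1 < z -> T1 <= (z - z `^ lam) / (z - z `^ (- lam)).
Proof.
move=> hl; have /andP[l0 l1] := hl.
have k0 : 0 < (1 - lam) / (2 * (1 + lam)) by apply: divr_gt0; lra.
have z2 : (1 : R) < 2 by lra.
have [T [eT [kT Tb]]] := @inf_img [set z | 1 < z] (fun z => (z - z `^ lam) / (z - z `^ (- lam)))
   ((1 - lam) / (2 * (1 + lam))) 2 z2 (fun z z1 => let: And4 h _ _ _ := @ratio_facts lam z hl z1 in h).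
exists T; split => //; split => //.
apply/andP; split; first lra.
have := Tb 2 z2; have [_ h _ _] := @ratio_facts lam 2 hl z2; lra.
Qed.

Lemma tau2_facts (lam : R) : 0 < lam < 1 -> exists T2, tau2 lam = T2%:E /\ 1 < T2 /\
  forall z, 1 < z -> (z - z `^ (- lam)) / (z - z `^ lam) <= T2.
Proof.
move=> hl; have /andP[l0 l1] := hl.
have z2 : (1 : R) < 2 by lra.
have [T [eT [kT Tb]]] := @sup_img [set z | 1 < z] (fun z => (z - z `^ (- lam)) / (z - z `^ lam))
   ((1 - lam) / (2 * (1 + lam)))^-1 2 z2 (fun z z1 => let: And4 _ _ _ h := @ratio_facts lam z hl z1 in h).
exists T; split => //; split => //.
have := Tb 2 z2; have [_ _ h _] := @ratio_facts lam 2 hl z2; lra.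
Qed.

Lemma pair_alpha (r1x r1y r2x r2y t T A B E : R) :
  0 < r1x -> 0 < r1y -> 0 < r2x -> 0 < r2y -> 0 <= t -> A * B = 1 -> 0 < A -> 0 < B ->
  r1y <= r1x * A -> r2x <= r2y * A -> t * r1y <= T * r2y -> 0 <= T ->
  T * (E - B) <= E - A -> B <= E ->
  r2x - t * r1x <= (r2y - t * r1y) * E.
Proof.
move=> *.
have h1 : B * r1y <= r1x by nra.
have h2 : t * (B * r1y) <= t * r1x by nra.
have h3 : t * r1y * (E - B) <= T * r2y * (E - B) by nra.
have h4 : T * r2y * (E - B) <= r2y * (E - A) by nra.
nra.
Qed.

Lemma pair_beta (r1x r1y r2x r2y s T A B E : R) :
  0 < r1x -> 0 < r1y -> 0 < r2x -> 0 < r2y -> 0 <= s -> A * B = 1 -> 0 < A -> 0 < B ->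
  r1x <= r1y * A -> r2y <= r2x * A -> T * r2y <= s * r1y -> 0 <= T ->
  E - B <= T * (E - A) -> A <= E ->
  s * r1x - r2x <= (s * r1y - r2y) * E.
Proof.
move=> *.
have h1 : B * r2y <= r2x by nra.
have h2 : s * r1x <= s * (r1y * A) by nra.
have h3 : T * r2y * (E - A) <= s * r1y * (E - A) by nra.
have h4 : r2y * (E - B) <= T * r2y * (E - A) by nra.
nra.
Qed.

End S.


Lemma pos_helper (R : realType) (t r1 r2 T : R) :
  t * r1 <= T * r2 -> T < 1 -> 0 < r2 -> 0 < r2 - t * r1.
Proof. move=> *; nra. Qed.

Lemma pos_helper2 (R : realType) (s r1 r2 T : R) :
  T * r2 <= s * r1 -> 1 < T -> 0 < r2 -> 0 < s * r1 - r2.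
Proof. move=> *; nra. Qed.

Lemma part1 (R : realType) (M : Type) (d : M -> M -> R) (Q : set M) :
  is_dist d -> (forall x y, Q x -> Q y -> d x y <= 1) ->
  forall (a mu lam : R) (gam : set M),
     0 < a -> 0 < mu <= 1 -> 0 < lam < 1 -> gam `<=` Q -> gam !=set0 ->
     (0 < tau1 lam)%E /\ (tau2 lam < +oo)%E /\
     (forall r1 r2 : M -> R, cone d (lam * a) mu gam r1 -> cone d (lam * a) mu gam r2 ->
        (hilbert_theta d a mu gam r1 r2 <= (Dbound lam a)%:E)%E).
Proof.
move=> [d0 [dxx [dsym dtri]]] dQ a mu lam gam a0 /andP[mu0 mu1] hl gQ [y0 gy0].
have /andP[l0 l1] := hl.
have [T1 [eT1 [/andP[T10 T11] T1b]]] := @tau1_facts R lam hl.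
have [T2 [eT2 [T21 T2b]]] := @tau2_facts R lam hl.
rewrite eT1 eT2 lte_fin ltry; split => //; split => //.
move=> r1 r2 [r1p r1h] [r2p r2h].
have dpow x y : gam x -> gam y -> 0 <= d x y `^ mu <= 1.
  move=> gx gy; rewrite powR_ge0 /=.
  have := @ge0_ler_powR R mu (ltW mu0) (d x y) 1; rewrite powR1; apply => //.
  - by rewrite nnegrE.
  - by rewrite nnegrE.
  - by apply: dQ; apply: gQ.
set L := lam * a.
have L0 : 0 < L by rewrite /L mulr_gt0.
set e2 := expR (2 * L).
have e2E : e2 = expR L * expR L by rewrite /e2 -expRD; congr expR; ring.
have eLb x y : gam x -> gam y -> expR (L * d x y `^ mu) <= expR L.
  move=> gx gy; rewrite ler_expR; have := dpow x y gx gy; nra.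
have eL1 : 1 <= expR L by rewrite -expR0 ler_expR; lra.
have r1y00 := r1p y0 gy0; have r2y00 := r2p y0 gy0.
have hi x : gam x -> r2 x * r1 y0 <= r2 y0 * r1 x * e2.
  move=> gx; have h1 := r2h x y0 gx gy0; have h2 := r1h y0 x gy0 gx.
  have h5 : r2 x <= r2 y0 * expR L.
    exact: (le_trans h1 (ler_wpM2l (ltW r2y00) (eLb x y0 gx gy0))).
  have h6 : r1 y0 <= r1 x * expR L.
    exact: (le_trans h2 (ler_wpM2l (ltW (r1p x gx)) (eLb y0 x gy0 gx))).
  have h7 := ler_pM (ltW (r2p x gx)) (ltW r1y00) h5 h6.
  have -> : r2 y0 * r1 x * e2 = r2 y0 * expR L * (r1 x * expR L) by rewrite e2E; ring.
  exact: h7.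
have lo x : gam x -> r2 y0 * r1 x <= r2 x * r1 y0 * e2.
  move=> gx; have h1 := r2h y0 x gy0 gx; have h2 := r1h x y0 gx gy0.
  have h5 : r2 y0 <= r2 x * expR L.
    exact: (le_trans h1 (ler_wpM2l (ltW (r2p x gx)) (eLb y0 x gy0 gx))).
  have h6 : r1 x <= r1 y0 * expR L.
    exact: (le_trans h2 (ler_wpM2l (ltW r1y00) (eLb x y0 gx gy0))).
  have h7 := ler_pM (ltW r2y00) (ltW (r1p x gx)) h5 h6.
  have -> : r2 x * r1 y0 * e2 = r2 x * expR L * (r1 y0 * expR L) by rewrite e2E; ring.
  exact: h7.
have tau_pair x y : gam x -> gam y ->
   let D := d x y `^ mu in
   [/\ T1 * (expR (a * D) - expR (- (L * D))) <= expR (a * D) - expR (L * D),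
        expR (a * D) - expR (- (L * D)) <= T2 * (expR (a * D) - expR (L * D)),
        expR (- (L * D)) <= expR (a * D), expR (L * D) <= expR (a * D) &
        expR (L * D) * expR (- (L * D)) = 1].
  move=> gx gy D; have /andP[D0 D1] := dpow x y gx gy; rewrite -/D in D0 D1.
  have AB : expR (L * D) * expR (- (L * D)) = 1 by rewrite -expRD subrr expR0.
  have LD : 0 <= L * D by rewrite mulr_ge0 // ltW.
  have aD : 0 <= a * D by rewrite mulr_ge0 // ltW.
  have LaD : L * D = lam * (a * D) by rewrite /L mulrA.
  have BE : expR (- (L * D)) <= expR (a * D) by rewrite ler_expR; lra.
  have AE : expR (L * D) <= expR (a * D) by rewrite ler_expR LaD; nra.
  have [Dle|Dp'] := lerP D 0.
    have D00 : D = 0 by apply/le_anti; rewrite Dle D0.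
    by rewrite D00 !mulr0 oppr0 !subrr !mulr0 expR0 mulr1; split.
  have z1 : 1 < expR (a * D) by rewrite -expR0 ltr_expR mulr_gt0.
  have ez1 : expR (a * D) `^ lam = expR (L * D).
    by rewrite /powR gt_eqF ?expR_gt0 // expRK /L; congr expR; ring.
  have ez2 : expR (a * D) `^ (- lam) = expR (- (L * D)).
    by rewrite /powR gt_eqF ?expR_gt0 // expRK /L; congr expR; ring.
  have aD' : 0 < a * D by rewrite mulr_gt0.
  have AE' : expR (L * D) < expR (a * D) by rewrite ltr_expR LaD; nra.
  have BE' : expR (- (L * D)) < expR (a * D) by rewrite ltr_expR; nra.
  have h1 := T1b _ z1; have h2 := T2b _ z1; rewrite ez1 ez2 in h1 h2.
  rewrite ler_pdivlMr ?subr_gt0 // in h1.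
  rewrite ler_pdivrMr ?subr_gt0 // in h2.
have e20 : 0 < e2 by exact: expR_gt0.
set t0 := T1 * r2 y0 / (r1 y0 * e2).
set s0 := T2 * r2 y0 * e2 / r1 y0.
have t00 : 0 < t0 by rewrite /t0 divr_gt0 ?mulr_gt0.
have s00 : 0 < s0 by rewrite /s0 divr_gt0 ?mulr_gt0 //; lra.
have t0b x : gam x -> t0 * r1 x <= T1 * r2 x.
  move=> gx; have := lo x gx; have := r1p x gx => r1x0 h.
  rewrite /t0 mulrAC ler_pdivrMr ?mulr_gt0 //.
  have : T1 * (r2 y0 * r1 x) <= T1 * (r2 x * r1 y0 * e2) by rewrite ler_pM2l.
  lra.
have s0b x : gam x -> T2 * r2 x <= s0 * r1 x.
  move=> gx; have := hi x gx; have := r1p x gx => r1x0 h.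
  rewrite /s0 mulrAC ler_pdivlMr //.
  have : T2 * (r2 x * r1 y0) <= T2 * (r2 y0 * r1 x * e2) by rewrite ler_pM2l; lra.
  lra.
have ha1 : (t0%:E <= hilbert_alpha d a mu gam r1 r2)%E.
  apply: ereal_sup_ubound; exists t0 => //; split => //; left; split.
  - by move=> x gx; apply: (@pos_helper R _ _ _ _ (t0b x gx) T11 (r2p x gx)).
  - move=> x y gx gy.
    have [h1 _ h3 _ h5] := tau_pair x y gx gy.
    apply: (@pair_alpha R (r1 x) (r1 y) (r2 x) (r2 y) t0 T1
       (expR (L * d x y `^ mu)) (expR (- (L * d x y `^ mu))) (expR (a * d x y `^ mu)))
       (r1p x gx) (r1p y gy) (r2p x gx) (r2p y gy) (ltW t00) h5 (expR_gt0 _) (expR_gt0 _)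
       _ (r2h x y gx gy) (t0b y gy) (ltW T10) h1 h3.
    by rewrite /L dsym; apply: r1h.
have ha2 : (hilbert_alpha d a mu gam r1 r2 <= (r2 y0 / r1 y0)%:E)%E.
  apply: ge_ereal_sup => _ [t [tp [[hp _]|he]] <-]; rewrite lee_fin ler_pdivlMr //.
  - by have := hp y0 gy0; rewrite subr_gt0 => /ltW.
  - by rewrite he.
have hb2 : (hilbert_beta d a mu gam r1 r2 <= s0%:E)%E.
  apply: ereal_inf_lbound; exists s0 => //; split => //; left; split.
  - by move=> x gx; apply: (@pos_helper2 R _ _ _ _ (s0b x gx) T21 (r2p x gx)).
  - move=> x y gx gy.
    have [_ h2 _ h4 h5] := tau_pair x y gx gy.
    apply: (@pair_beta R (r1 x) (r1 y) (r2 x) (r2 y) s0 T2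
       (expR (L * d x y `^ mu)) (expR (- (L * d x y `^ mu))) (expR (a * d x y `^ mu)))
       (r1p x gx) (r1p y gy) (r2p x gx) (r2p y gy) (ltW s00) h5 (expR_gt0 _) (expR_gt0 _)
       (r1h x y gx gy) _ (s0b y gy) (ltW (lt_trans ltr01 T21)) h2 h4.
    by rewrite /L dsym; apply: r2h.
have hb1 : ((r2 y0 / r1 y0)%:E <= hilbert_beta d a mu gam r1 r2)%E.
  apply: le_ereal_inf_tmp => _ [t [tp [[hp _]|he]] <-]; rewrite lee_fin ler_pdivrMr //.
  - by have := hp y0 gy0; rewrite subr_gt0 => /ltW.
  - by rewrite he.
rewrite /hilbert_theta; move: ha1 ha2 hb1 hb2.
case: (hilbert_alpha d a mu gam r1 r2) => [al| |]; case: (hilbert_beta d a mu gam r1 r2) => [be| |] //=.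
rewrite !lee_fin => h1 h2 h3 h4.
have al0 : 0 < al := lt_le_trans t00 h1.
have c0 : 0 < r2 y0 / r1 y0 by rewrite divr_gt0.
have be0 : 0 < be := lt_le_trans c0 h3.
rewrite al0 lee_fin /Dbound eT1 eT2 /=.
have q : be / al <= s0 / t0.
  rewrite ler_pdivrMr // mulrAC ler_pdivlMr //.
  exact: ler_pM (ltW be0) (ltW t00) h4 h1.
have T1T2 : 0 < T2 / T1 by rewrite divr_gt0 //; lra.
have sE : s0 / t0 = T2 / T1 * expR (4 * L).
  have -> : expR (4 * L) = e2 * e2 by rewrite /e2 -expRD; congr expR; ring.
  rewrite /s0 /t0; field.
  by rewrite !gt_eqF // ?mulr_gt0.
have lnb : ln (be / al) <= ln (s0 / t0).
  by rewrite ler_ln // posrE divr_gt0.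
have e : ln (T2 / T1 * expR (4 * L)) = ln (T2 / T1) + 4 * L.
  by rewrite [ln (_ * expR _)]lnM ?posrE ?expR_gt0 // expRK.
rewrite sE e in lnb.
have : L <= a by rewrite /L ler_piMl // ?ltW.
lra.
Qed.


Lemma exp_bound (R : realType) (u v c : R) : 0 < u -> 0 < v ->
  `|ln u - ln v| <= c -> u <= v * expR c.
Proof.
move=> u0 v0 h.
have h1 : ln u <= ln v + c by have := ler_norm (ln u - ln v); lra.
rewrite -[u]lnK ?posrE // -[v in v * _]lnK ?posrE // -expRD ler_expR //.
Qed.

Lemma pow_le_self (R : realType) (x mu : R) : 0 <= x <= 1 -> 0 < mu <= 1 -> x <= x `^ mu.
Proof.
move=> /andP[x0 x1] /andP[mu0 mu1].
have [xle|xp] := lerP x 0.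
  have -> : x = 0 by apply/le_anti; rewrite xle x0.
  by rewrite powR_ge0.
have := @ger_powR R x; rewrite xp x1 => /(_ isT mu 1 mu1); rewrite powRr1 //.
Qed.

Lemma inv_bound (R : realType) (u v E : R) : 0 < u -> 0 < v -> 0 < E ->
  v <= u * E -> u^-1 <= v^-1 * E.
Proof.
move=> u0 v0 E0 h.
rewrite -div1r ler_pdivrMr // mulrC mulrA mulrC mulrA ler_pdivlMr // mul1r.
by rewrite mulrC.
Qed.

Lemma transfer_cone (R : realType) (M : Type) (d : M -> M -> R) (Q : set M)
  (dQ : forall x y, Q x -> Q y -> d x y <= 1) (d0 : forall x y, 0 <= d x y)
  (dsym : forall x y, d x y = d y x)
  (mu lams a' G K1 K2 : R) (gam gamj : set M) (f : M -> M) (Jleaf Jfull h r : M -> R) :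
     0 < mu <= 1 -> 0 < lams < 1 -> 0 < a' ->
     0 <= G -> 0 <= K1 -> 0 <= K2 ->
     gam `<=` Q -> gamj `<=` Q ->
     (forall x, gamj x -> gam (f x)) ->
     (forall x y, gamj x -> gamj y -> d (f x) (f y) <= lams * d x y) ->
     (forall x, Q x -> 0 < Jfull x) ->
     (forall x y, Q x -> Q y -> `|ln (Jfull x) - ln (Jfull y)| <= K1 * d x y) ->
     (forall x, gamj x -> 0 < Jleaf x) ->
     (forall x y, gamj x -> gamj y -> `|ln (Jleaf x) - ln (Jleaf y)| <= K2 * d x y) ->
     (forall x, Q x -> 0 < h x) ->
     (forall x y, Q x -> Q y -> `|ln (h x) - ln (h y)| <= G * d x y) ->
     cone d a' mu gam r ->
     cone d ((a' + G) * lams `^ mu + (K1 + K2)) mu gamj (transfer f Jleaf Jfull h r).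
Proof.
move=> hmu /andP[ls0 ls1] a0 G0 K10 K20 gQ gjQ fg fc Jf0 Jfl Jl0 Jll h0 hl [r0 rh].
have /andP[mu0 mu1] := hmu.
have p0 : 0 < lams `^ mu by rewrite powR_gt0.
set p := lams `^ mu in p0 *.
split.
  move=> x gx; rewrite /transfer.
  apply: mulr_gt0; [apply: mulr_gt0|]; last by apply: h0; apply: gQ; exact: fg.
    by apply: divr_gt0; [exact: Jl0| apply: Jf0; exact: gjQ].
  by apply: r0; exact: fg.
move=> x y gx gy; rewrite /transfer.
set dd := d x y; set df := d (f x) (f y); set D := dd `^ mu.
have dd01 : 0 <= dd <= 1 by apply/andP; split; [exact: d0| apply: dQ; exact: gjQ].
have df01 : 0 <= df <= 1 by apply/andP; split; [exact: d0| apply: dQ; apply: gQ; exact: fg].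
have ddD : dd <= D := @pow_le_self R _ _ dd01 hmu.
have dfm : df <= df `^ mu := @pow_le_self R _ _ df01 hmu.
have dfmD : df `^ mu <= p * D.
  rewrite /D /p -powRM; [|exact: ltW ls0|exact: d0].
  apply: ge0_ler_powR; [exact: ltW mu0|rewrite nnegrE; exact: d0|
    rewrite nnegrE; apply: mulr_ge0; [exact: ltW ls0|exact: d0]|].
  exact: fc.
have Qx : Q x by exact: gjQ. have Qy : Q y by exact: gjQ.
have gfx := fg x gx; have gfy := fg y gy.
have Qfx : Q (f x) by exact: gQ. have Qfy : Q (f y) by exact: gQ.
have e1 : Jleaf x <= Jleaf y * expR (K2 * dd) by apply: exp_bound; auto.
have e2 : Jfull y <= Jfull x * expR (K1 * dd).
  apply: exp_bound; [exact: Jf0|exact: Jf0|].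
  by have := Jfl y x Qy Qx; rewrite /dd dsym.
have e2' := @inv_bound R _ _ _ (Jf0 x Qx) (Jf0 y Qy) (expR_gt0 _) e2.
have e3 : h (f x) <= h (f y) * expR (G * df) by apply: exp_bound; auto.
have e4 : r (f x) <= r (f y) * expR (a' * df `^ mu) by exact: rh.
have Jlx := Jl0 x gx; have Jly := Jl0 y gy.
have Jfx := Jf0 x Qx; have Jfy := Jf0 y Qy.
have rfx := r0 _ gfx; have rfy := r0 _ gfy.
have hfx := h0 _ Qfx; have hfy := h0 _ Qfy.
have iJfx : 0 < (Jfull x)^-1 by rewrite invr_gt0.
have step1 := ler_pM (ltW Jlx) (ltW iJfx) e1 e2'.
have step2 := ler_pM (mulr_ge0 (ltW Jlx) (ltW iJfx)) (ltW rfx) step1 e4.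
have step3 := ler_pM (mulr_ge0 (mulr_ge0 (ltW Jlx) (ltW iJfx)) (ltW rfx)) (ltW hfx) step2 e3.
apply: (le_trans step3).
have Ty : 0 <= Jleaf y / Jfull y * r (f y) * h (f y).
  by rewrite !mulr_ge0 ?invr_ge0 ?ltW.
have -> : Jleaf y * expR (K2 * dd) * ((Jfull y)^-1 * expR (K1 * dd)) *
    (r (f y) * expR (a' * df `^ mu)) * (h (f y) * expR (G * df)) =
    Jleaf y / Jfull y * r (f y) * h (f y) *
    expR (K2 * dd + K1 * dd + a' * df `^ mu + G * df).
  by rewrite !expRD; ring.
apply: ler_wpM2l => //; rewrite ler_expR.
have i1 : K2 * dd <= K2 * D by apply: ler_wpM2l.
have i2 : K1 * dd <= K1 * D by apply: ler_wpM2l.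
have i3 : a' * df `^ mu <= a' * (p * D) by apply: ler_wpM2l => //; exact: ltW.
have i4 : G * df <= G * (p * D) by apply: ler_wpM2l => //; exact: le_trans dfm dfmD.
have -> : ((a' + G) * p + (K1 + K2)) * D = K2 * D + K1 * D + a' * (p * D) + G * (p * D).
  by ring.
lra.
Qed.


Theorem lemma4p6 (R : realType) (M : Type) (d : M -> M -> R) (Q : set M) :
  is_dist d -> (forall x y, Q x -> Q y -> d x y <= 1) ->
  (forall (a mu lam : R) (gam : set M),
     0 < a -> 0 < mu <= 1 -> 0 < lam < 1 -> gam `<=` Q -> gam !=set0 ->
     (0 < tau1 lam)%E /\ (tau2 lam < +oo)%E /\
     (forall r1 r2 : M -> R, cone d (lam * a) mu gam r1 -> cone d (lam * a) mu gam r2 ->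
        (hilbert_theta d a mu gam r1 r2 <= (Dbound lam a)%:E)%E))
  /\
  (forall (mu lams a a' G K1 K2 : R) (gam gamj : set M) (f : M -> M)
          (Jleaf Jfull h : M -> R),
     0 < mu <= 1 -> 0 < lams < 1 -> 0 < a -> 0 < a' ->
     0 <= G -> 0 <= K1 -> 0 <= K2 ->
     gam `<=` Q -> gamj `<=` Q -> gam !=set0 -> gamj !=set0 ->
     (forall x, gamj x -> gam (f x)) ->
     (forall x y, gamj x -> gamj y -> d (f x) (f y) <= lams * d x y) ->
     (forall x, Q x -> 0 < Jfull x) ->
     (forall x y, Q x -> Q y -> `|ln (Jfull x) - ln (Jfull y)| <= K1 * d x y) ->
     (forall x, gamj x -> 0 < Jleaf x) ->
     (forall x y, gamj x -> gamj y -> `|ln (Jleaf x) - ln (Jleaf y)| <= K2 * d x y) ->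
     (forall x, Q x -> 0 < h x) ->
     (forall x y, Q x -> Q y -> `|ln (h x) - ln (h y)| <= G * d x y) ->
     (a' + (G + (K1 + K2) / lams `^ mu)) * lams `^ mu / a < 1 ->
     forall r1 r2 : M -> R, cone d a' mu gam r1 -> cone d a' mu gam r2 ->
       (hilbert_theta d a mu gamj (transfer f Jleaf Jfull h r1) (transfer f Jleaf Jfull h r2)
          <= (Dbound ((a' + (G + (K1 + K2) / lams `^ mu)) * lams `^ mu / a) a)%:E)%E).
Proof.
move=> hd hQ; split; first exact: (@part1 R M d Q hd hQ).
move=> mu lams a a' G K1 K2 gam gamj f Jleaf Jfull h hmu hls a0 a'0 G0 K10 K20
  gQ gjQ gne gjne fg fc Jf0 Jfl Jl0 Jll h0 hl lt1 r1 r2 c1 c2.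
have /andP[ls0 ls1] := hls.
have p0 : 0 < lams `^ mu by rewrite powR_gt0.
set p := lams `^ mu in p0 lt1 *.
set lam' := (a' + (G + (K1 + K2) / p)) * p / a in lt1 *.
have X0 : 0 < a' + (G + (K1 + K2) / p).
  have : 0 <= (K1 + K2) / p by rewrite divr_ge0 // ?addr_ge0 // ltW.
  lra.
have hl' : 0 < lam' < 1 by rewrite lt1 andbT /lam' divr_gt0 // mulr_gt0.
have eq : lam' * a = (a' + G) * p + (K1 + K2).
  rewrite /lam' divfK ?gt_eqF //; field; by rewrite gt_eqF.
have [_ [_ H]] := @part1 R M d Q hd hQ a mu lam' gamj a0 hmu hl' gjQ gjne.
have [d0 [dxx [dsym dtri]]] := hd.
apply: H; rewrite eq; apply: (@transfer_cone R M d Q hQ d0 dsym mu lams a' G K1 K2 gam gamj f)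
  => //.
Qed.
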